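(* $11\notin\operatorname{Spec}(32_{65})$.
   Context: $32_{65}$ is the finite integral symmetric relation algebra with atoms $1'$, $a$, $b$, $c$, all symmetric, in which a diversity cycle $xyz$ (with $x,y,z\in\{a,b,c\}$) is mandatory (i.e. $x;y\ge z$) if it involves $a$ and forbidden (i.e. $x;y\cdot z=0$) otherwise. A representation over a set $U$ is an embedding into the full relation algebra on $U\times U$. $\operatorname{Spec}(A)$ is the set of cardinals $\alpha\le\omega$ such that $A$ has a representation over a set of cardinality $\alpha$. *)

(* Defs.v *)
From HB Require Import structures.
From mathcomp Require Import all_boot.
Set Implicit Arguments. Unset Strict Implicit. Unset Printing Implicit Defensive.

(* Atoms of 32_65: the identity atom e = 1', and diversity atoms a, b, c. *)
Inductive atom := e | a | b | c.

Definition atom_to_ord (x : atom) : 'I_4 :=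
  match x with e => inord 0 | a => inord 1 | b => inord 2 | c => inord 3 end.
Definition ord_to_atom (i : 'I_4) : atom :=
  match val i with 0 => e | 1 => a | 2 => b | _ => c end.
Lemma atom_to_ordK : cancel atom_to_ord ord_to_atom.
Proof. by case; rewrite /ord_to_atom /= inordK. Qed.

HB.instance Definition _ := Equality.copy atom (can_type atom_to_ordK).
HB.instance Definition _ := Choice.copy atom (can_type atom_to_ordK).
HB.instance Definition _ := Countable.copy atom (can_type atom_to_ordK).
HB.instance Definition _ := Finite.copy atom (can_type atom_to_ordK).

Definition atom_conv (x : atom) : atom := x.

(* Composition of atoms: e is the identity; for diversity atoms x, y,
   e <= x;y iff y = converse of x (= x), and a diversity atom z lies below
   x;y iff the cycle xyz is mandatory, i.e. iff it involves a. *)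
Definition atom_comp (x y : atom) : {set atom} :=
  match x, y with
  | e, _ => [set y]
  | _, e => [set x]
  | _, _ => [set z | ((z == e) && (y == atom_conv x))
                     || ((z != e) && [|| x == a, y == a | z == a])]
  end.

(* The relation algebra 32_65 = complex algebra of the atom structure:
   elements are sets of atoms; Boolean operations are the set operations. *)
Definition RA := {set atom}.
Definition ra_one : RA := [set e].
Definition ra_conv (X : RA) : RA := [set atom_conv x | x in X].
Definition ra_comp (X Y : RA) : RA :=
  \bigcup_(x in X) \bigcup_(y in Y) atom_comp x y.

Definition rel_id (U : finType) : {set U * U} := [set p | p.1 == p.2].
Definition rel_conv (U : finType) (R : {set U * U}) : {set U * U} :=
  [set p | (p.2, p.1) \in R].
Definition rel_comp (U : finType) (R S : {set U * U}) : {set U * U} :=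
  [set p | [exists z, ((p.1, z) \in R) && ((z, p.2) \in S)]].

Definition is_representation (U : finType) (h : RA -> {set U * U}) : Prop :=
  injective h /\
  (forall X Y, h (X :|: Y) = h X :|: h Y) /\
  (forall X, h (~: X) = ~: h X) /\
  h ra_one = rel_id U /\
  (forall X, h (ra_conv X) = rel_conv (h X)) /\
  (forall X Y, h (ra_comp X Y) = rel_comp (h X) (h Y)).

Definition in_Spec (n : nat) : Prop :=
  exists (U : finType) (h : RA -> {set U * U}), #|U| = n /\ is_representation h.

(* Main.v *)
Require Import Defs.
From mathcomp Require Import all_boot zify.

Definition aeq (x y : atom) := match x, y with e,e|a,a|b,b|c,c => true | _,_ => false end.
Lemma aeqE x y : (x == y) = aeq x y.
Proof. by case: x; case: y; rewrite ?eqxx //=; apply/eqP. Qed.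

Lemma comp1 x y : ra_comp [set x] [set y] = atom_comp x y.
Proof. by rewrite /ra_comp !big_set1. Qed.

Lemma conv_id X : ra_conv X = X.
Proof. by rewrite /ra_conv imset_id. Qed.

Set Implicit Arguments. Unset Strict Implicit.
Section S.
Implicit Types X Y : RA.
Variables (U : finType) (h : RA -> {set U * U}).
Hypothesis H : is_representation h.

Lemma hU X Y : h (X :|: Y) = h X :|: h Y.
Proof. by case: H => _ [-> _]. Qed.
Lemma hC X : h (~: X) = ~: h X.
Proof. by case: H => _ [_ [-> _]]. Qed.
Lemma hI X Y : h (X :&: Y) = h X :&: h Y.
Proof.
have -> : X :&: Y = ~: (~: X :|: ~: Y) by rewrite setCU !setCK.
by rewrite hC hU !hC setCU !setCK.
Qed.
Lemma h0 : h set0 = set0.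
Proof. by rewrite -(setICr set0) hI hC setICr. Qed.
Lemma hT : h setT = setT.
Proof. by rewrite -setC0 hC h0 setC0. Qed.
Lemma hmono X Y : X \subset Y -> h X \subset h Y.
Proof. by move/setUidPr => <-; rewrite hU subsetUl. Qed.

Definition hin u v p := (u, v) \in h [set p].

Lemma hnotin u v X r : (u, v) \in h X -> r \notin X -> ~~ hin u v r.
Proof.
move=> Hu Hr; apply/negP => Hr'.
have : (u, v) \in h (X :&: [set r]) by rewrite hI inE Hu.
have -> : X :&: [set r] = set0.
  apply/setP => z; rewrite !inE; apply/negP => /andP [Hz /eqP Ez].
  by move: Hr; rewrite -Ez Hz.
by rewrite h0 inE.
Qed.

Lemma hin_det u v p q : hin u v p -> hin u v q = (p == q).
Proof.
move=> Hp; case: (eqVneq p q) => [<- //| npq].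
apply/negbTE; apply: (@hnotin u v [set p] q Hp); by rewrite inE eq_sym.
Qed.

Lemma hsome u v : exists p, hin u v p.
Proof.
have : (u, v) \in h setT by rewrite hT inE.
have -> : [set: atom] = [set e] :|: [set a] :|: [set b] :|: [set c].
  by apply/setP; case; rewrite !inE !aeqE.
rewrite !hU !inE.
by move=> /orP [/orP [/orP [Hx|Hx]|Hx]|Hx]; eexists; exact: Hx.
Qed.

Lemma he u v : hin u v e = (u == v).
Proof. by case: H => _ [_ [_ [h1 _]]]; rewrite /hin -/ra_one h1 inE. Qed.

Lemma hsym u v p : hin u v p -> hin v u p.
Proof.
case: H => _ [_ [_ [_ [hc _]]]].
by rewrite /hin -{1}(conv_id [set p]) hc inE.
Qed.

Lemma hcomp u v w p q : hin u v p -> hin v w q -> (u, w) \in h (atom_comp p q).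
Proof.
case: H => _ [_ [_ [_ [_ hc]]]] H1 H2.
rewrite -comp1 hc inE; apply/existsP; exists v; exact/andP.
Qed.

Lemma hcompE u w p q z : z \in atom_comp p q -> hin u w z ->
  exists v, hin u v p /\ hin v w q.
Proof.
case: H => _ [_ [_ [_ [_ hc]]]] Hz Hw.
have : (u, w) \in h (ra_comp [set p] [set q]).
  rewrite comp1; have Hs : [set z] \subset atom_comp p q by rewrite sub1set.
  by move: Hw; rewrite /hin; apply/subsetP; apply: hmono.
rewrite hc inE => /existsP [v /andP [H1 H2]]; by exists v.
Qed.

Definition adj u v := hin u v b || hin u v c.
Definition N x := [set y | adj x y].
Definition M x := [set y | hin x y a].

Lemma adj_sym u v : adj u v -> adj v u.
Proof. by case/orP => Hx; apply/orP; [left|right]; apply: hsym. Qed.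

Lemma adj_neq u v : adj u v -> u != v.
Proof. by case/orP => Hx; rewrite -he (hin_det _ Hx) aeqE. Qed.

Lemma tri u v w : adj u v -> adj v w -> ~~ adj u w.
Proof.
move=> Hp Hq; case/orP: Hp => Hp; case/orP: Hq => Hq; move: (hcomp Hp Hq) => Huw;
 rewrite /adj negb_or; apply/andP; split; apply: (hnotin Huw);
 by rewrite /atom_comp inE !aeqE.
Qed.

Lemma edge_common u v : adj u v -> exists w, hin u w a /\ hin w v a.
Proof.
by case/orP => Hx; apply: (hcompE _ Hx); rewrite /atom_comp inE !aeqE.
Qed.

Lemma NM_card x : #|N x| + #|M x| = #|U|.-1.
Proof.
have E : [set~ x] = N x :|: M x.
  apply/setP => y; rewrite !inE /adj; case: (hsome x y) => p Hp.
  rewrite !(hin_det _ Hp) eq_sym -he (hin_det _ Hp).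
  by case: p Hp; rewrite !aeqE.
have D : N x :&: M x = set0.
  apply/setP => y; rewrite !inE /adj; case: (hsome x y) => p Hp.
  rewrite !(hin_det _ Hp).
  by case: p Hp; rewrite !aeqE.
by rewrite -(cardsC1 x) E -[RHS]addn0 -(cards0 U) -D cardsUI.
Qed.

Lemma deg_edge x y : adj x y -> #|N x| + #|N y| <= #|U|.-1.
Proof.
move=> Hxy; case: (edge_common Hxy) => w [H1 H2].
have D : N x :&: N y = set0.
  apply/setP => z; rewrite !inE; apply/negP => /andP [H3 H4].
  by move: (tri H3 (adj_sym H4)); rewrite Hxy.
rewrite -(cardsC1 w) -cardsUI D cards0 addn0; apply: subset_leq_card.
apply/subsetP => z; rewrite !inE /adj => /orP [] Hz; apply/negP => /eqP Ez;
  move: Hz; rewrite Ez.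
- by rewrite !(hin_det _ H1) !aeqE.
- by rewrite !(hin_det _ (hsym H2)) !aeqE.
Qed.

Lemma neq1 u v w p q : hin u v p -> hin u w q -> aeq p q = false -> (v == w) = false.
Proof.
move=> H1 H2 npq; apply/negP => /eqP E; move: H2; rewrite -E (hin_det _ H1).
by rewrite aeqE npq.
Qed.
Lemma neq2 u v w p q : hin v u p -> hin w u q -> aeq p q = false -> (v == w) = false.
Proof. by move=> H1 H2; apply: neq1 (hsym H1) (hsym H2). Qed.

Lemma four x m : m \in M x -> exists W : {set U}, W \subset N x :&: N m /\ #|W| = 4.
Proof.
rewrite inE => Hm.
have [w1 [A1 B1]] : exists w, hin x w b /\ hin w m b
  by apply: (hcompE _ Hm); rewrite /atom_comp inE !aeqE.
have [w2 [A2 B2]] : exists w, hin x w c /\ hin w m c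
  by apply: (hcompE _ Hm); rewrite /atom_comp inE !aeqE.
have [w3 [A3 B3]] : exists w, hin x w b /\ hin w m c
  by apply: (hcompE _ Hm); rewrite /atom_comp inE !aeqE.
have [w4 [A4 B4]] : exists w, hin x w c /\ hin w m b
  by apply: (hcompE _ Hm); rewrite /atom_comp inE !aeqE.
exists [set w1; w2; w3; w4]; split.
  have C1 := hsym B1; have C2 := hsym B2; have C3 := hsym B3; have C4 := hsym B4.
  apply/subsetP => z; rewrite !inE /adj.
  move=> Hz; repeat (case/orP: Hz => Hz); move/eqP: Hz => ->;
  by rewrite ?A1 ?A2 ?A3 ?A4 ?C1 ?C2 ?C3 ?C4 ?orbT.
have -> : [set w1; w2; w3; w4] = w1 |: (w2 |: (w3 |: [set w4])).
  by apply/setP => z; rewrite !inE !orbA.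
by rewrite !cardsU1 cards1 !inE (neq1 A1 A2 erefl) (neq2 B1 B3 erefl) (neq1 A1 A4 erefl)
  (neq1 A2 A3 erefl) (neq2 B2 B4 erefl) (neq1 A3 A4 erefl).
Qed.


Lemma has_nbr x : exists y, adj x y.
Proof.
have Hx : hin x x e by rewrite he.
have [y [H1 _]] : exists y, hin x y b /\ hin y x b
  by apply: (hcompE _ Hx); rewrite /atom_comp inE !aeqE.
by exists y; rewrite /adj H1.
Qed.

Lemma deg5 x : #|U| = 11 -> 5 <= #|N x|.
Proof.
move=> cU; rewrite leqNgt; apply/negP => Hlt.
have Hx : hin x x e by rewrite he.
have [m [Hm _]] : exists m, hin x m a /\ hin m x a
  by apply: (hcompE _ Hx); rewrite /atom_comp inE !aeqE.
have sub : forall m, m \in M x -> (N x \subset N m) /\ #|N x| = 4.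
  move=> m' Hm'; case: (four Hm') => W [HW cW].
  have HW' : W \subset N x by apply: subset_trans HW (subsetIl _ _).
  have EW : W == N x by rewrite eqEcard HW' cW.
  move/eqP: EW => EW; rewrite -EW cW; split => //.
  by apply: subset_trans HW (subsetIr _ _).
have Hm' : m \in M x by rewrite inE.
have [_ c4] := sub m Hm'.
have cM : #|M x| = 6 by move: (NM_card x); rewrite cU c4 /= => E; lia.
have [y Hy] := has_nbr x.
have S : x |: M x \subset N y.
  apply/subsetP => z; rewrite !inE => /orP [/eqP -> | Hz].
    by apply: adj_sym.
  have Hz' : z \in M x by rewrite inE.
  have [Sz _] := sub z Hz'.
  have : y \in N z by apply: (subsetP Sz); rewrite inE.
  by rewrite inE => /adj_sym.
have := subset_leq_card S; rewrite cardsU1 cM inE.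
have -> : hin x x a = false by rewrite (hin_det _ Hx) aeqE.
move=> Hc; have := deg_edge Hy; rewrite c4 cU /= => Hd. lia.
Qed.

Lemma deg_eq5 x : #|U| = 11 -> #|N x| = 5.
Proof.
move=> cU; have [y Hy] := has_nbr x.
have := deg_edge Hy; have := deg5 y cU; have := deg5 x cU; rewrite cU /=.
move=> H1 H2 H3; lia.
Qed.

End S.

Lemma parity (U : finType) (h : RA -> {set U * U}) (H : is_representation h)
  (cU : #|U| = 11) : False.
Proof.
pose f x y := nat_of_bool (adj h x y && (enum_rank x < enum_rank y)%N).
have E1 : \sum_(x : U) #|N h x| = 55.
  rewrite (eq_bigr (fun _ => 5)); last by move=> x _; exact: deg_eq5.
  by rewrite sum_nat_const cardE -cardE cU.
have E2 : forall x, #|N h x| = \sum_(y : U) (f x y + f y x).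
  move=> x; rewrite -sum1_card big_mkcond /=; apply: eq_bigr => y _; rewrite inE.
  case Hxy: (adj h x y).
  - have Hyx := adj_sym H Hxy.
    have nr : (enum_rank x : nat) != enum_rank y.
      apply: contra (adj_neq H Hxy) => /eqP /val_inj /enum_rank_inj ->.
      exact: eqxx.
    rewrite /f Hxy Hyx /=.
    by case: ltngtP nr.
  - have Hyx : adj h y x = false.
      by apply/negP => /(adj_sym H); rewrite Hxy.
    by rewrite /f Hxy Hyx.
have : 55 = \sum_(x : U) \sum_(y : U) f x y + \sum_(x : U) \sum_(y : U) f y x.
  by rewrite -E1 -big_split; apply: eq_bigr => x _; rewrite E2 big_split.
rewrite [X in _ + X]exchange_big /=.
by move/(congr1 odd); rewrite oddD addbb.
Qed.

Theorem mainTheorem5 : ~ in_Spec 11.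
Proof.
by case=> U [h [cU H]]; exact: (parity H cU).
Qed.
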